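(* Let $L$ be a finite-dimensional Lie algebra over a perfect field $K$ of characteristic $\neq 2$ such that $\mathrm{HomLie}(L)$ is closed with respect to the anticommutator $\varphi * \psi = \frac12(\varphi\circ\psi+\psi\circ\varphi)$. Then one of the following holds: (i) $\mathrm{HomLie}(L)$, as a Jordan algebra with respect to $*$, is such that every element of it is either invertible or nilpotent; (ii) $L$ decomposes as a direct sum of vector spaces $L = A \oplus B$ with $A, B \neq 0$, $[[A,A],B] = 0$ and $[[B,B],A] = 0$ (equivalently, $L$ has an idempotent Hom-Lie structure different from $0$ and from the identity map). Moreover, if $K$ is algebraically closed, then condition (i) can be replaced by the condition: (i)$'$ the Jordan algebra $\mathrm{HomLie}(L)$ is isomorphic to the semidirect sum of $K$ and a nilpotent algebra.
   Context: A Hom-Lie structure on a Lie algebra $L$ is a linear map $\varphi: L \to L$ satisfying $[[x,y],\varphi(z)] + [[z,x],\varphi(y)] + [[y,z],\varphi(x)] = 0$ for all $x,y,z \in L$. $\mathrm{HomLie}(L)$ is the vector space of all Hom-Lie structures on $L$; when closed under the anticommutator it is a (special) Jordan algebra with product $\varphi*\psi$. *)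

(* Defs.v *)
From HB Require Import structures.
From mathcomp Require Import all_boot all_order all_algebra.
Set Implicit Arguments. Unset Strict Implicit. Unset Printing Implicit Defensive.
Import GRing.Theory.
Local Open Scope ring_scope.


Definition is_lie_bracket (K : fieldType) (V : vectType K) (br : V -> V -> V) : Prop :=
  [/\ (forall (a : K) (x y z : V), br (a *: x + y) z = a *: br x z + br y z),
      (forall (a : K) (x y z : V), br z (a *: x + y) = a *: br z x + br z y),
      (forall x : V, br x x = 0) &
      (forall x y z : V, br x (br y z) + br y (br z x) + br z (br x y) = 0)].

Definition homlie (K : fieldType) (V : vectType K) (br : V -> V -> V)
    (phi : 'End(V)) : Prop :=
  forall x y z : V,
    br (br x y) (phi z) + br (br z x) (phi y) + br (br y z) (phi x) = 0.

Definition jprod (K : fieldType) (V : vectType K) (phi psi : 'End(V)) : 'End(V) :=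
  (2%:R : K)^-1 *: ((phi \o psi)%VF + (psi \o phi)%VF).

Fixpoint jpow (K : fieldType) (V : vectType K) (phi : 'End(V)) (n : nat) : 'End(V) :=
  if n is m.+1 then jprod phi (jpow phi m) else \1%VF.

Definition jinvertible (K : fieldType) (V : vectType K) (J : 'End(V) -> Prop)
    (phi : 'End(V)) : Prop :=
  exists2 psi, J psi & jprod phi psi = \1%VF /\ jprod (jprod phi phi) psi = phi.

Definition jnilpotent (K : fieldType) (V : vectType K) (phi : 'End(V)) : Prop :=
  exists n : nat, (0 < n)%N /\ jpow phi n = 0.

Inductive jmonomial (K : fieldType) (V : vectType K) (N : {vspace 'End(V)})
    : nat -> 'End(V) -> Prop :=
  | jmon1 x : x \in N -> jmonomial N 1 x
  | jmonM i j x y : jmonomial N i x -> jmonomial N j y ->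
      jmonomial N (i + j) (jprod x y).

(* N is a nilpotent (Jordan) algebra: N^m = 0 for all large m, where
   N^m is spanned by the monomials of degree m. *)
Definition jnilpotent_algebra (K : fieldType) (V : vectType K)
    (N : {vspace 'End(V)}) : Prop :=
  (forall x y, x \in N -> y \in N -> jprod x y \in N) /\
  exists n : nat, forall m x, (n <= m)%N -> jmonomial N m x -> x = 0.

(* Perfect field: char 0 or Frobenius surjective. *)
Definition perfect_field (K : fieldType) : Prop :=
  forall p : nat, p \in [pchar K] -> forall x : K, exists y : K, y ^+ p = x.

(* Main.v *)
Require Import Defs.
From HB Require Import structures.
From mathcomp Require Import all_boot all_order all_algebra.
From mathcomp Require Import ring zify.
From Stdlib Require Import Classical.
Set Implicit Arguments. Unset Strict Implicit. Unset Printing Implicit Defensive.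
Import GRing.Theory.
Local Open Scope ring_scope.

Section VspPred.
Variables (K : fieldType) (T : vectType K).

Lemma vspace_of_pred (P : T -> Prop) :
  P 0 -> (forall a x y, P x -> P y -> P (a *: x + y)) ->
  exists U : {vspace T}, forall x, x \in U <-> P x.
Proof.
move=> P0 Plin.
have PU : forall (U : {vspace T}) x, (forall y, y \in U -> P y) -> P x ->
   forall z, z \in (U + <[x]>)%VS -> P z.
  move=> U x HU Px z /memv_addP [u Uu [w /vlineP [k ->] ->]].
  by rewrite addrC; apply: Plin => //; apply: HU.
suff: forall n (U : {vspace T}), (\dim {:T} - \dim U <= n)%N ->
   (forall y, y \in U -> P y) -> exists W : {vspace T}, forall x, x \in W <-> P x.
  move=> /(_ (\dim {:T}) 0%VS); apply; first exact: leq_subr.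
  by move=> y; rewrite memv0 => /eqP ->.
elim=> [|n IH] U hd HU.
  exists U => x; split; first exact: HU.
  move=> Px; apply: NNPP => xU.
  have sub : (U <= U + <[x]>)%VS by apply: addvSl.
  have := ltn_leqif (dimv_leqif_eq sub).
  have -> : (U == (U + <[x]>)%VS) = false.
    apply/negbTE/negP => /eqP eU; apply: xU.
    by rewrite eU; apply: (subvP (addvSr _ _)); exact: memv_line.
  move=> /= lt; have := dimvS (subvf (U + <[x]>)%VS); lia.
case: (classic (exists x, P x /\ x \notin U)) => [[x [Px xU]]|nex].
  have sub : (U <= U + <[x]>)%VS by apply: addvSl.
  have := ltn_leqif (dimv_leqif_eq sub).
  have -> : (U == (U + <[x]>)%VS) = false.
    apply/negbTE/negP => /eqP eU; move/negP: xU; apply.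
    by rewrite eU; apply: (subvP (addvSr _ _)); exact: memv_line.
  move=> /= lt; apply: (IH (U + <[x]>)%VS); last exact: PU.
  have := dimvS (subvf (U + <[x]>)%VS); lia.
exists U => x; split; first exact: HU.
move=> Px; apply: NNPP => xU; apply: nex; exists x; split => //; exact/negP.
Qed.
End VspPred.
Section EndBasics.
Variables (K : fieldType) (V : vectType K).
Implicit Types f g h z w : 'End(V).

Definition pw f n : 'End(V) := iter n (fun g => (f \o g)%VF) \1%VF.

Lemma pwS f n : pw f n.+1 = (f \o pw f n)%VF. Proof. by []. Qed.
Lemma pw0 f : pw f 0 = \1%VF. Proof. by []. Qed.

Lemma comm_pw f g : (g \o f = f \o g)%VF -> forall n, (g \o pw f n = pw f n \o g)%VF.
Proof.
move=> c; elim=> [|n IH]; first by rewrite pw0 comp_lfun1l comp_lfun1r.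
by rewrite pwS comp_lfunA c -!comp_lfunA IH.
Qed.

Lemma pw_comm f n : (f \o pw f n = pw f n \o f)%VF.
Proof. exact: comm_pw. Qed.

Lemma pwD f m n : pw f (m + n)%N = (pw f m \o pw f n)%VF.
Proof.
elim: m => [|m IH]; first by rewrite add0n pw0 comp_lfun1l.
by rewrite addSn pwS IH comp_lfunA.
Qed.

Lemma pwSr f n : pw f n.+1 = (pw f n \o f)%VF.
Proof. by rewrite pwS pw_comm. Qed.

Definition lmulf f (z : 'End(V)) : 'End(V) := (f \o z)%VF.
Fact lmulf_is_linear f : linear (lmulf f).
Proof. by move=> a x y; rewrite /lmulf comp_lfunDr comp_lfunZr. Qed.
HB.instance Definition _ f :=
  GRing.isSemilinear.Build K _ _ _ (lmulf f) (GRing.semilinear_linear (lmulf_is_linear f)).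
Definition Lmul f : 'End('End(V)) := linfun (lmulf f).
Lemma LmulE f z : Lmul f z = (f \o z)%VF.
Proof. by rewrite /Lmul lfunE. Qed.

Lemma half_double (z : 'End(V)) : (2%:R : K) != 0 -> (2%:R^-1 : K) *: (z + z) = z.
Proof. by move=> h2; rewrite -mulr2n -scaler_nat scalerA mulVf // scale1r. Qed.

End EndBasics.

Import VectorInternalTheory.
Section Eigen.
Variables (K : fieldType) (V : vectType K).

Lemma eigen_exists (f : 'End(V)) : GRing.closed_field_axiom K -> (0 < dim V)%N ->
  exists c : K, exists2 v : V, v != 0 & f v = c *: v.
Proof.
move=> clK dpos.
pose A := f2mx f.
pose p := char_poly A.
have sp : size p = (dim V).+1 by rewrite size_char_poly.
have [x hx] := clK (dim V) (fun i => - p`_i) dpos.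
have rx : root p x.
  apply/rootP; rewrite horner_coef sp big_ord_recr /=.
  have -> : p`_(dim V) = 1.
    by have /monicP := char_poly_monic A; rewrite /lead_coef sp.
  rewrite mul1r hx -big_split /=; apply: big1 => i _.
  by rewrite mulNr addrN.
have : eigenvalue A x by rewrite eigenvalue_root_char.
case/eigenvalueP => v vA vn0.
exists x; exists (r2v v).
  by apply: contraNneq vn0 => h; rewrite -(r2vK v) h linear0.
by rewrite unlock /= r2vK vA linearZ.
Qed.
End Eigen.

Lemma max_nat (P : nat -> Prop) (B : nat) :
  (exists n, P n) -> (forall n, P n -> (n <= B)%N) ->
  exists n, P n /\ forall m, P m -> (m <= n)%N.
Proof.
move=> [n0 Pn0] HB.
suff: forall d n, (B - n <= d)%N -> P n -> exists n, P n /\ forall m, P m -> (m <= n)%N.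
  by apply; [apply: leqnn | exact: Pn0].
elim=> [|d IH] n hd Pn.
  exists n; split=> // m Pm; have := HB m Pm; have := HB n Pn; lia.
case: (classic (exists m, P m /\ (n < m)%N)) => [[m [Pm lt]]|nex].
  apply: (IH m) => //; have := HB m Pm; lia.
exists n; split=> // m Pm; apply: NNPP => h; apply: nex; exists m; split=> //; lia.
Qed.

Section Flag.
Variables (K : fieldType) (V : vectType K).
Implicit Types (F G : 'End(V) -> Prop) (x y z a : 'End(V)) (v w : V).

Fixpoint kap F n v : Prop :=
  match n with 0 => v = 0 | n'.+1 => forall a, F a -> kap F n' (a v) end.

Lemma kap0 F n : kap F n 0.
Proof. by elim: n => [|n IH] //= a _; rewrite linear0. Qed.

Lemma kap_lin F n c v w : kap F n v -> kap F n w -> kap F n (c *: v + w).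
Proof.
elim: n v w => [|n IH] v w /=; first by move=> -> ->; rewrite scaler0 addr0.
by move=> hv hw a Fa; rewrite linearP; apply: IH; [apply: hv | apply: hw].
Qed.

Lemma kapZ F n c v : kap F n v -> kap F n (c *: v).
Proof. by move=> h; rewrite -[_ *: _]addr0; apply: kap_lin => //; apply: kap0. Qed.

Lemma kapD F n v w : kap F n v -> kap F n w -> kap F n (v + w).
Proof. by move=> h1 h2; rewrite -[v]scale1r; apply: kap_lin. Qed.

Lemma kapS F n v : kap F n v -> kap F n.+1 v.
Proof.
elim: n v => [|n IH] v /=; first by move=> -> a _; rewrite linear0.
by move=> h a Fa; apply: IH; apply: h.
Qed.

Lemma kap_le F m n v : (m <= n)%N -> kap F m v -> kap F n v.
Proof.
move=> le; rewrite -(subnK le); elim: (n - m)%N => [|d IH] //= h.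
by apply: kapS; apply: IH.
Qed.

Definition Resp (e : nat -> V -> Prop) z := forall n v, e n.+1 v -> e n (z v).

Definition Nilp F := exists k, forall v, kap F k v.

Lemma kap_resp F a : F a -> Resp (kap F) a.
Proof. by move=> Fa n v /= h; apply: h. Qed.

Lemma jprodE (x y : 'End(V)) v : jprod x y v = (2%:R^-1 : K) *: (x (y v) + y (x v)).
Proof. by rewrite /jprod scale_lfunE add_lfunE !comp_lfunE. Qed.

Section R.
Variables (S : 'End(V) -> Prop) (k : nat).
Hypothesis Sk : forall v, kap S k v.

Definition Rm m z := forall n v, kap S n v -> kap S (n + k - m)%N (z v).

Lemma Rm0 z : Rm 0 z.
Proof. by move=> n v _; rewrite subn0; apply: (@kap_le _ k) => //; apply: leq_addl. Qed.

Lemma RmS m z s : S s -> Rm m z -> Rm m.+1 (jprod s z).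
Proof.
move=> Ss Rw n v hv; rewrite jprodE; apply: kapZ; apply: kapD.
  have := Rw n v hv; case e: (n + k - m)%N => [|j] /=.
    by move=> ->; rewrite linear0; apply: kap0.
  move=> h; have -> : (n + k - m.+1)%N = j by lia.
  exact: h.
case: n hv => [|n] /= hv.
  by rewrite hv !linear0; apply: kap0.
have := Rw n (s v) (hv s Ss); have -> : (n.+1 + k - m.+1)%N = (n + k - m)%N by lia.
done.
Qed.

Lemma Rm_zero z : Rm (k + k) z -> z = 0.
Proof.
move=> Rw; apply/lfunP => v; rewrite zero_lfunE.
by have := Rw k v (Sk v); rewrite subnn.
Qed.
End R.


Lemma normalizer (M S : 'End(V) -> Prop) k :
  (forall x y, M x -> M y -> M (jprod x y)) ->
  (forall s, S s -> M s) -> S 0 ->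
  (forall v, kap S k v) ->
  forall x, M x -> ~ S x ->
  exists u, M u /\ ~ S u /\ forall s, S s -> S (jprod s u).
Proof.
move=> Mprod SM S0 Sk x Mx Sx.
apply: NNPP => nex.
have H : forall u, M u -> ~ S u -> exists s, S s /\ ~ S (jprod s u).
  move=> u Mu Su; apply: NNPP => h; apply: nex; exists u; split=> //; split=> // s Ss.
  by apply: NNPP => h2; apply: h; exists s; split.
have : forall m, exists z, M z /\ ~ S z /\ Rm S k m z.
  elim => [|m [z [Mz [Sz Rz]]]].
    by exists x; split=> //; split=> //; apply: Rm0.
  have [s [Ss Ssz]] := H z Mz Sz.
  exists (jprod s z); split; first by apply: Mprod => //; apply: SM.
  by split=> //; apply: RmS.
move=> /(_ (k + k)%N) [z [_ [Sz Rz]]].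
by apply: Sz; rewrite (Rm_zero Sk Rz).
Qed.

Lemma extend (S : 'End(V) -> Prop) k u r :
  (2%:R : K) != 0 ->
  (forall v, kap S k v) -> pw u r = 0 ->
  (forall s, S s -> S (jprod s u)) ->
  Nilp (fun a => S a \/ a = u).
Proof.
move=> two_neq0 Sk ur Snorm.
pose F' := fun a => S a \/ a = u.
have inv : forall i v, kap S i v -> kap S i (u v).
  elim=> [|i IH] v /=; first by move=> ->; rewrite linear0.
  move=> hv s Ss.
  have -> : s (u v) = (2%:R : K) *: (jprod s u v) - u (s v).
    by rewrite jprodE scalerA mulfV // scale1r addrK.
  apply: kapD; first by apply: kapZ; apply: hv; apply: Snorm.
  by rewrite -scaleN1r; apply: kapZ; apply: IH; apply: hv.
have main : forall i v, kap S i v -> kap F' (i * r) v.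
  elim=> [|i IH] v; first by rewrite mul0n.
  have step : forall j, (j <= r)%N -> forall w, kap S i.+1 w ->
      kap S i (pw u j w) -> kap F' (i * r + j) w.
    elim=> [|j IHj] hj w hw hj'.
      by rewrite addn0; apply: IH; rewrite pw0 id_lfunE in hj'.
    rewrite addnS => a [Sa | ->].
      apply: (@kap_le _ (i * r)); first exact: leq_addr.
      by apply: IH; exact: hw a Sa.
    apply: IHj; first by lia.
      by apply: inv.
    by rewrite -comp_lfunE -pwSr.
  move=> hv; rewrite mulSnr; apply: step => //.
  by rewrite ur zero_lfunE; apply: kap0.
by exists (k * r)%N => v; exact: main.
Qed.

Theorem flag_exists (M : 'End(V) -> Prop) :
  (2%:R : K) != 0 ->
  M 0 -> (forall c x y, M x -> M y -> M (c *: x + y)) ->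
  (forall x y, M x -> M y -> M (jprod x y)) ->
  (forall x, M x -> exists r, pw x r = 0) ->
  exists F, Nilp F /\ forall z, M z -> Resp (kap F) z.
Proof.
move=> two_neq0 M0 Mlin Mprod Mnil.
pose T F z := M z /\ Resp (kap F) z.
have T0 : forall F, T F 0.
  by move=> F; split=> // n v _; rewrite zero_lfunE; apply: kap0.
have Tlin : forall F c x y, T F x -> T F y -> T F (c *: x + y).
  move=> F c x y [Mx Rx] [My Ry]; split; first exact: Mlin.
  move=> n v hv; rewrite add_lfunE scale_lfunE; apply: kap_lin; [apply: Rx | apply: Ry] => //.
pose Good n := exists F, Nilp F /\ exists U : {vspace 'End(V)},
   (forall z, z \in U <-> T F z) /\ \dim U = n.
have [n [[F [NF [U [HU dU]]]] maxn]] : exists n, Good n /\ forall m, Good m -> (m <= n)%N.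
  apply: (@max_nat _ (\dim (fullv : {vspace 'End(V)}))).
    pose F0 := fun _ : 'End(V) => False.
    have [U HU] := vspace_of_pred (T0 F0) (@Tlin F0).
    exists (\dim U); exists F0; split; first by exists 1%N => v a [].
    by exists U.
  by move=> m [F [_ [U [_ <-]]]]; apply: dimvS; apply: subvf.
exists F; split => //.
move=> z Mz; apply: NNPP => Rz.
pose S := T F.
have [k Fk] := NF.
have Sk : forall v, kap S k v.
  have H : forall i v, kap F i v -> kap S i v.
    by elim=> [|i IH] v //= h a [Ma Ra]; apply: IH; exact: Ra.
  by move=> v; apply: H; apply: Fk.
have [u [Mu [Su Snorm]]] := @normalizer M S k Mprod (fun s h => proj1 h) (T0 F) Sk z Mz
   (fun h => Rz (proj2 h)).
have [r ur] := Mnil u Mu.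
have NF' := extend two_neq0 Sk ur Snorm.
pose F' := fun a => S a \/ a = u.
have [U' HU'] := vspace_of_pred (T0 F') (@Tlin F').
have : (\dim U' <= n)%N by apply: maxn; exists F'; split => //; exists U'.
have sub : (U + <[u]> <= U')%VS.
  apply/subvP => w /memv_addP [x xU [y /vlineP [c ->] ->]].
  rewrite addrC; apply/HU'; apply: Tlin.
    by split=> //; apply: kap_resp; right.
  have [Mx Rx] := (iffLR (HU x)) xU.
  by split=> //; apply: kap_resp; left; split.
have lt : (\dim U < \dim (U + <[u]>))%N.
  have := ltn_leqif (dimv_leqif_eq (addvSl U <[u]>%VS)).
  have -> : (U == (U + <[u]>)%VS) = false.
    apply/negbTE/negP => /eqP eU; apply: Su.
    have : u \in U by rewrite eU; apply: (subvP (addvSr _ _)); exact: memv_line.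
    by move/HU.
  by [].
rewrite -dU => h2; have h1 := dimvS sub.
by have := leq_trans lt (leq_trans h1 h2); rewrite ltnn.
Qed.

Lemma jmon_kap (N : {vspace 'End(V)}) F :
  (forall z, z \in N -> Resp (kap F) z) ->
  forall m x, jmonomial N m x -> forall n v, kap F (n + m) v -> kap F n (x v).
Proof.
move=> HN m x; elim => {m x} [x xN | i j x y _ IHx _ IHy] n v hv.
  by apply: HN => //; rewrite -addn1.
rewrite jprodE; apply: kapZ; apply: kapD.
  by apply: IHx; apply: IHy; rewrite -addnA.
by apply: IHy; apply: IHx; rewrite -addnA (addnC j i).
Qed.

Lemma jmon_zero (N : {vspace 'End(V)}) F k :
  (forall v, kap F k v) ->
  (forall z, z \in N -> Resp (kap F) z) ->
  forall m x, (k <= m)%N -> jmonomial N m x -> x = 0.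
Proof.
move=> Fk HN m x le jm; apply/lfunP => v; rewrite zero_lfunE.
have := jmon_kap HN jm (n := 0) (v := v); rewrite add0n; apply.
exact: kap_le le (Fk v).
Qed.

End Flag.
Lemma poly_sqrt (K : fieldType) N : (2%:R : K) != 0 ->
  exists P Q : {poly K}, P ^+ 2 * (1 + 'X) = 1 + 'X ^+ N.+1 * Q.
Proof.
move=> two0; elim: N => [|N [P [Q hPQ]]].
  by exists 1, 1; rewrite expr1n mul1r expr1 mulr1.
pose H : {poly K} := (2%:R^-1)%:P.
have H4 : H ^+ 2 * 4%:R = 1.
  rewrite /H -polyC_exp -polyC_natr -polyCM; congr (_%:P).
  by field.
pose A : {poly K} := 'X ^+ N.
exists (H * P * (3%:R - P ^+ 2 * (1 + 'X))),
  (H ^+ 2 * A * Q ^+ 2 * (A * 'X * Q - 3%:R)).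
have -> : (H * P * (3%:R - P ^+ 2 * (1 + 'X))) ^+ 2 * (1 + 'X) =
   H ^+ 2 * (P ^+ 2 * (1 + 'X)) * (3%:R - P ^+ 2 * (1 + 'X)) ^+ 2 by ring.
rewrite hPQ !exprSr -/A expr0 mul1r.
transitivity (1 + (H ^+ 2 * 4%:R - 1) + A * 'X * 'X * (H ^+ 2 * A * Q ^+ 2 * (A * 'X * Q - 3%:R))).
  ring.
by rewrite H4 subrr addr0; ring.
Qed.
Lemma zmod_aux (M : zmodType) (a b c : M) : a + b + (b + c) - (a + c) = b + b.
Proof. apply/eqP; rewrite subr_eq (addrACA b b) [b + a]addrC. done. Qed.

Section JAbs.
Variables (K : fieldType) (V : vectType K).
Variable J : 'End(V) -> Prop.
Hypothesis J0 : J 0.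
Hypothesis Jlin : forall a x y, J x -> J y -> J (a *: x + y).
Hypothesis J1 : J \1%VF.
Hypothesis Jprod : forall x y, J x -> J y -> J (jprod x y).
Hypothesis two_neq0 : (2%:R : K) != 0.
Implicit Types x y f e z : 'End(V).

Lemma JZ a x : J x -> J (a *: x).
Proof. by move=> Jx; rewrite -[_ *: _]addr0; apply: Jlin. Qed.
Lemma JD x y : J x -> J y -> J (x + y).
Proof. by move=> Jx Jy; rewrite -[x]scale1r; apply: Jlin. Qed.
Lemma JN x : J x -> J (- x).
Proof. by rewrite -scaleN1r; apply: JZ. Qed.
Lemma JB x y : J x -> J y -> J (x - y).
Proof. by move=> Jx Jy; apply: JD => //; apply: JN. Qed.

Lemma jprod_comm x y : (x \o y = y \o x)%VF -> jprod x y = (x \o y)%VF.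
Proof. by move=> c; rewrite /jprod -c half_double. Qed.

Lemma J_comp_comm x y : J x -> J y -> (x \o y = y \o x)%VF -> J (x \o y)%VF.
Proof. by move=> Jx Jy c; rewrite -jprod_comm //; apply: Jprod. Qed.

Lemma J_pw f n : J f -> J (pw f n).
Proof.
move=> Jf; elim: n => [|n IH]; first exact: J1.
by rewrite pwS; apply: J_comp_comm => //; rewrite pw_comm.
Qed.

Lemma jpow_pw f n : jpow f n = pw f n.
Proof. by elim: n => //= n IH; rewrite IH jprod_comm // pw_comm. Qed.

Lemma JU x y : J x -> J y -> J (x \o y \o x)%VF.
Proof.
move=> Jx Jy.
have -> : (x \o y \o x)%VF =
   2%:R *: jprod x (jprod x y) - jprod (x \o x)%VF y.
  rewrite /jprod -!comp_lfunZr -!comp_lfunZl !comp_lfunDr !comp_lfunDl !comp_lfunA.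
  rewrite -scalerDr scalerA mulfV // scale1r -scalerBr zmod_aux half_double //.
by apply: JB; [apply: JZ; apply: Jprod => //; apply: Jprod | apply: Jprod => //; apply: J_comp_comm].
Qed.


Definition Cset f z := J z /\ (z \o f = f \o z)%VF.

Lemma Cset0 f : Cset f 0.
Proof. by split=> //; rewrite comp_lfun0l comp_lfun0r. Qed.

Lemma Cset_lin f a x y : Cset f x -> Cset f y -> Cset f (a *: x + y).
Proof.
move=> [Jx cx] [Jy cy]; split; first exact: Jlin.
by rewrite comp_lfunDl comp_lfunDr -comp_lfunZl -comp_lfunZr cx cy.
Qed.

Lemma Cset_mul f z : J f -> Cset f z -> Cset f (f \o z)%VF.
Proof.
move=> Jf [Jz cz]; split; first by apply: J_comp_comm.
by rewrite -comp_lfunA cz.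
Qed.

Lemma idem_aux (P w : 'End(V)) : (w \o P = P \o w)%VF -> P = ((P \o P) \o w)%VF ->
  ((P \o w) \o (P \o w) = P \o w)%VF.
Proof. by move=> cP eP; rewrite -!comp_lfunA (comp_lfunA w) cP -comp_lfunA !comp_lfunA -eP. Qed.

Lemma fitting f : J f ->
  (exists psi, J psi /\ (f \o psi = \1)%VF /\ (psi \o f = \1)%VF) \/
  (exists n, (0 < n)%N /\ pw f n = 0) \/
  (exists e, J e /\ (e \o e = e)%VF /\ e != 0 /\ e != \1%VF).
Proof.
move=> Jf.
have [C HC] := vspace_of_pred (Cset0 f) (@Cset_lin f).
pose L := Lmul f.
have LC : forall z, z \in C -> L z \in C.
  by move=> z /HC Cz; apply/HC; rewrite LmulE; apply: Cset_mul.
have C1 : \1%VF \in C.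
  by apply/HC; split=> //; rewrite comp_lfun1l comp_lfun1r.
case: (boolP (lker f == 0%VS)) => [kf | nkf].
  left.
  have kL : (C :&: lker L = 0)%VS.
    apply/eqP; rewrite -subv0; apply/subvP => z /memv_capP [_].
    rewrite memv_ker LmulE memv0 => /eqP fz0.
    apply/eqP/lfunP => v; rewrite zero_lfunE; apply: (lker0P kf).
    by rewrite -comp_lfunE fz0 zero_lfunE linear0.
  have eC : (L @: C)%VS = C.
    apply/eqP; rewrite eqEdim limg_dim_eq // leqnn andbT.
    by apply/subvP => z /memv_imgP [w wC ->]; exact: LC.
  have : \1%VF \in (L @: C)%VS by rewrite eC.
  move=> /memv_imgP [psi /HC [Jpsi cpsi]]; rewrite LmulE => e1.
  by exists psi; split=> //; split; [rewrite e1 | rewrite cpsi -e1].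
right.
pose Y k := iter k (fun U => (L @: U)%VS) C.
have YS : forall k, Y k.+1 = (L @: Y k)%VS by [].
have Ymem : forall k z, z \in Y k <-> exists2 w, w \in C & z = (pw f k \o w)%VF.
  elim => [|k IH] z.
    split; first by move=> zC; exists z => //; rewrite comp_lfun1l.
    by move=> [w wC ->]; rewrite comp_lfun1l.
  rewrite YS; split.
    move=> /memv_imgP [y /IH [w wC ->] ->]; exists w => //.
    by rewrite LmulE comp_lfunA.
  move=> [w wC ->]; rewrite pwS -comp_lfunA -LmulE; apply: memv_img.
  by apply/IH; exists w.
have Ysub : forall k, (Y k.+1 <= Y k)%VS.
  elim => [|k IH].
    by apply/subvP => z /memv_imgP [w wC ->]; exact: LC.
  by rewrite YS; apply: limgS.
have [k0 Hk0] : exists k, Y k.+1 = Y k.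
  apply: NNPP => nex.
  have H : forall k, (\dim (Y k) + k <= \dim C)%N.
    elim => [|k IH]; first by rewrite /= addn0 leqnn.
    have ne : Y k.+1 != Y k by apply/eqP => e; apply: nex; exists k.
    have := ltn_leqif (dimv_leqif_eq (Ysub k)); rewrite ne => /= lt.
    lia.
  have := H (\dim C).+1; lia.
have Ystab : forall j, Y (k0 + j)%N = Y k0.
  elim => [|j IH]; first by rewrite addn0.
  by rewrite addnS YS IH -YS Hk0.
pose m := k0.+1.
have : pw f m \in Y (m + m)%N.
  have e1 : Y (m + m)%N = Y k0.
    by rewrite -(Ystab (m + m - k0)%N); congr (Y _); rewrite /m; lia.
  have e2 : Y m = Y k0.
    by rewrite -(Ystab 1); congr (Y _); rewrite /m; lia.
  by rewrite e1 -e2; apply/Ymem; exists \1%VF => //; rewrite comp_lfun1r.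
case/Ymem => w /HC [Jw cw] ew.
case: (eqVneq (pw f m) 0) => [nil | nnil].
  by left; exists m.
right; exists (pw f m \o w)%VF.
have cwp : (w \o pw f m = pw f m \o w)%VF := comm_pw cw m.
split; first by apply: J_comp_comm; [apply: J_pw | | rewrite cwp].
split.
  by apply: idem_aux => //; rewrite -pwD.
split.
  apply/eqP => e0; move/eqP: nnil; apply.
  by rewrite ew pwD -comp_lfunA e0 comp_lfun0r.
apply/eqP => e1; move/negP: nkf; apply.
apply/lker0P => u v fe.
have inv : forall t, t = (w \o pw f k0)%VF (f t).
  move=> t; rewrite -comp_lfunE -comp_lfunA -pwSr -/m cwp e1.
  by rewrite id_lfunE.
by rewrite (inv u) (inv v) fe.
Qed.


Definition Nil (z : 'End(V)) := exists k, pw z k = 0.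

Lemma pwZ a z k : pw (a *: z) k = a ^+ k *: pw z k.
Proof.
elim: k => [|k IH]; first by rewrite expr0 scale1r.
by rewrite !pwS IH -comp_lfunZl -comp_lfunZr scalerA exprS.
Qed.

Lemma NilZ a z : Nil z -> Nil (a *: z).
Proof. by move=> [k hk]; exists k; rewrite pwZ hk scaler0. Qed.

Lemma pw_inj z k : injective z -> injective (pw z k).
Proof.
move=> iz; elim: k => [|k IH] u v; first by rewrite !id_lfunE.
by rewrite !pwS !comp_lfunE => /iz /IH.
Qed.

Lemma inj_scal_nil c (n : 'End(V)) k : c != 0 -> pw n k = 0 ->
  forall v, (c *: \1%VF + n) v = 0 -> v = 0.
Proof.
move=> c0 nk v; rewrite add_lfunE scale_lfunE id_lfunE => h.
have nv : n v = (- c) *: v by rewrite scaleNr; apply/eqP; rewrite -subr_eq0 opprK addrC h.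
have H : forall j, pw n j v = (- c) ^+ j *: v.
  elim=> [|j IH]; first by rewrite id_lfunE expr0 scale1r.
  by rewrite pwS comp_lfunE IH linearZ /= nv scalerA exprS mulrC.
have := H k; rewrite nk zero_lfunE => /esym /eqP; rewrite scaler_eq0 expf_eq0 oppr_eq0.
by rewrite (negbTE c0) andbF /= => /eqP.
Qed.

Section Local.
Hypothesis noidem : forall e, J e -> (e \o e = e)%VF -> e = 0 \/ e = \1%VF.
Hypothesis clK : GRing.closed_field_axiom K.
Hypothesis dpos : (0 < dim V)%N.

Lemma exists_nz : exists v : V, v != 0.
Proof.
exists (vpick (fullv : {vspace V})); rewrite vpick0 -dimv_eq0 dimvf.
by rewrite -lt0n.
Qed.

Lemma nil_sing x : Nil x -> exists2 v, v != 0 & x v = 0.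
Proof.
move=> [k hk]; have [z0 nz0] := exists_nz.
apply: NNPP => nex.
have H : forall j, pw x j z0 != 0.
  elim=> [|j IH]; first by rewrite id_lfunE.
  rewrite pwS comp_lfunE; apply/negP => /eqP h; apply: nex; exists (pw x j z0) => //.
by have := H k; rewrite hk zero_lfunE eqxx.
Qed.

Lemma sing_nil z : J z -> (exists2 v, v != 0 & z v = 0) -> Nil z.
Proof.
move=> Jz [v nv zv].
case: (fitting Jz) => [[psi [_ [_ pz]]] | [[n [_ hn]] | [e [Je [ee [e0 e1]]]]]].
- by move: nv; rewrite -[v]id_lfunE -pz comp_lfunE zv linear0 eqxx.
- by exists n.
- by case: (noidem Je ee) => h; [move/eqP: e0 | move/eqP: e1].
Qed.

Lemma local f : J f -> exists c, Nil (f - c *: \1%VF).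
Proof.
move=> Jf; have [c [v nv fv]] := eigen_exists f clK dpos.
exists c; apply: sing_nil; first by apply: JB => //; apply: JZ.
by exists v => //; rewrite add_lfunE opp_lfunE scale_lfunE id_lfunE fv subrr.
Qed.


Local Notation EA := (lfun_algType dpos).

Lemma EA_exp (x : EA) n : x ^+ n = pw x n.
Proof. by elim: n => [|n IH] //; rewrite exprSr IH. Qed.

Lemma horner_comm (m : EA) p : horner_alg m p * m = m * horner_alg m p.
Proof.
have e1 : horner_alg m (p * 'X) = horner_alg m p * m.
  by rewrite rmorphM /= horner_algX.
have e2 : horner_alg m ('X * p) = m * horner_alg m p.
  by rewrite rmorphM /= horner_algX.
by rewrite -e1 -e2 mulrC.
Qed.

Lemma J_horner (m : EA) p : J m -> J (horner_alg m p).
Proof.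
move=> Jm; elim/poly_ind: p => [|p c IH]; first by rewrite rmorph0.
rewrite rmorphD rmorphM /= horner_algX horner_algC.
apply: JD; last by apply: JZ.
change (J (m \o horner_alg m p)%VF); apply: J_comp_comm => //.
exact: (horner_comm m p).
Qed.

Lemma sqrt_exists u c : J u -> c != 0 -> Nil (u - c *: \1%VF) ->
  exists v, J v /\ (v \o u = u \o v)%VF /\ (v \o u \o v = \1)%VF.
Proof.
move=> Ju c0 [k hk].
pose m : EA := c^-1 *: (u - c *: \1%VF).
have Jm : J m by apply: JZ; apply: JB => //; apply: JZ.
have mk : m ^+ k.+1 = 0.
  by rewrite EA_exp pwS /m pwZ hk scaler0 comp_lfun0r.
have um : (u : EA) = c *: (1 + m).
  by rewrite /m scalerDr scalerA mulfV // scale1r addrC subrK.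
have [a ha] : exists a : K, a ^+ 2 * c = 1.
  have [x hx] := @clK 2%N (fun i => if i == 0%N then c^-1 else 0) isT.
  exists x; rewrite hx !big_ord_recr big_ord0 /= expr0 mulr1 mul0r addr0 add0r.
  by rewrite mulVf.
have [P [Q hPQ]] := poly_sqrt k two_neq0.
pose hP := horner_alg m P.
have cP : hP * (1 + m) = (1 + m) * hP.
  by rewrite mulrDr mulrDl mulr1 mul1r horner_comm.
have key : hP ^+ 2 * (1 + m) = 1.
  have := congr1 (horner_alg m) hPQ.
  rewrite rmorphM rmorphXn rmorphD rmorph1 /= horner_algX => ->.
  by rewrite rmorphD rmorph1 rmorphM rmorphXn /= horner_algX mk mul0r addr0.
exists (a *: hP : EA).
split; first by apply: JZ; apply: J_horner.
split.
  change ((u : EA) * (a *: hP) = (a *: hP) * u).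
  by rewrite um -scalerAl -scalerAr -scalerAl -scalerAr !scalerA mulrC cP.
change ((a *: hP) * ((u : EA) * (a *: hP)) = 1).
rewrite um -scalerAl -scalerAr -!scalerAl !scalerA -cP.
rewrite -scalerAr scalerA [hP * (hP * _)]mulrA -expr2 key.
by rewrite mulrA -expr2 ha scale1r.
Qed.


Lemma nil_add x y : J x -> J y -> Nil x -> Nil y -> Nil (x + y).
Proof.
move=> Jx Jy Nx Ny.
have Ju : J (x + y) by apply: JD.
have [c hc] := local Ju.
case: (eqVneq c 0) => [c0 | c0].
  by move: hc; rewrite c0 scale0r subr0.
have [v [Jv [cv vuv]]] := sqrt_exists Ju c0 hc.
have sing : forall z, Nil z -> exists2 w, w != 0 & (v \o z \o v)%VF w = 0.
  move=> z Nz; have [w0 nw0 zw0] := nil_sing Nz.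
  have h : v ((x + y) (v w0)) = w0 by rewrite -[RHS]id_lfunE -vuv !comp_lfunE.
  exists ((x + y) (v w0)).
    apply: contraNneq nw0 => h0.
    by rewrite -h h0 linear0.
  by rewrite !comp_lfunE h zw0 linear0.
have Nx' := sing_nil (JU Jv Jx) (sing x Nx).
have Ny' := sing_nil (JU Jv Jy) (sing y Ny).
have sum : (v \o x \o v)%VF + (v \o y \o v)%VF = \1%VF.
  by rewrite -comp_lfunDl -comp_lfunDr.
have ey : (v \o y \o v)%VF = 1 *: \1%VF + - (v \o x \o v)%VF.
  by rewrite scale1r -sum addrC addKr.
have [kx hkx] : Nil (- (v \o x \o v)%VF) by rewrite -scaleN1r; apply: NilZ.
have inj : injective (v \o y \o v)%VF.
  move=> a b e; apply/eqP; rewrite -subr_eq0; apply/eqP.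
  apply: (inj_scal_nil (oner_neq0 K) hkx).
  by rewrite -ey linearB /= e subrr.
have [ky hky] := Ny'.
have [z0 nz0] := exists_nz.
have := pw_inj (k := ky) inj (x1 := z0) (x2 := 0).
rewrite hky !zero_lfunE => /(_ erefl) e.
by move: nz0; rewrite e eqxx.
Qed.

Definition Mset z := J z /\ Nil z.

Lemma Nil0 : Nil 0.
Proof. by exists 1%N; rewrite pwS comp_lfun0l. Qed.

Lemma M0 : Mset 0.
Proof. by split; [exact: J0 | exact: Nil0]. Qed.

Lemma M_lin a x y : Mset x -> Mset y -> Mset (a *: x + y).
Proof.
move=> [Jx Nx] [Jy Ny]; split; first exact: Jlin.
by apply: nil_add => //; [apply: JZ | apply: NilZ].
Qed.

Lemma Nil_sq z : Nil z -> Nil (z \o z)%VF.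
Proof.
move=> [k hk]; exists k.
have -> : pw (z \o z)%VF k = pw z (k + k)%N.
  elim: k {hk} => [|k IH] //.
  by rewrite pwS IH addnS addSn !pwS comp_lfunA.
by rewrite pwD hk comp_lfun0r.
Qed.

Lemma zmod_aux2 (M : zmodType) (a b c d : M) : a + b + (c + d) - a - d = b + c.
Proof.
by rewrite (addrC (a + b)) [a + b]addrC addrA addrK addrAC addrK addrC.
Qed.

Lemma M_prod x y : Mset x -> Mset y -> Mset (jprod x y).
Proof.
move=> [Jx Nx] [Jy Ny]; split; first exact: Jprod.
have -> : jprod x y = (2%:R^-1 : K) *:
   (((x + y) \o (x + y))%VF - (x \o x)%VF - (y \o y)%VF).
  by rewrite /jprod comp_lfunDl !comp_lfunDr zmod_aux2.
have Jxy : J (x + y) by apply: JD.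
have Jsq : forall z, J z -> J (z \o z)%VF by move=> z Jz; apply: J_comp_comm.
apply: NilZ; apply: nil_add.
- by apply: JB; apply: Jsq.
- by apply: JN; apply: Jsq.
- apply: nil_add.
  + exact: Jsq.
  + by apply: JN; apply: Jsq.
  + apply: Nil_sq; exact: nil_add.
  + by rewrite -scaleN1r; apply: NilZ; apply: Nil_sq.
- by rewrite -scaleN1r; apply: NilZ; apply: Nil_sq.
Qed.

Lemma M_nil x : Mset x -> exists r, pw x r = 0.
Proof. by case. Qed.


Lemma part2_core : exists N : {vspace 'End(V)},
  [/\ (forall phi, phi \in N -> J phi),
      (forall phi, J phi ->
         exists (c : K) (n : 'End(V)), n \in N /\ phi = c *: \1%VF + n),
      (forall c : K, c *: \1%VF \in N -> c *: (\1%VF : 'End(V)) = 0) &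
      jnilpotent_algebra N].
Proof.
have [N HN] := vspace_of_pred M0 M_lin.
have [F [[k Fk] HF]] := flag_exists two_neq0 M0 M_lin M_prod M_nil.
exists N; split.
- by move=> phi /HN [].
- move=> phi Jphi; have [c hc] := local Jphi.
  exists c, (phi - c *: \1%VF); split; last by rewrite addrC subrK.
  by apply/HN; split => //; apply: JB => //; apply: JZ.
- move=> c /HN [_ [n hn]].
  have e1 : pw (\1%VF : 'End(V)) n = \1%VF.
    by elim: n {hn} => [|n IH] //; rewrite pwS IH comp_lfun1l.
  move: hn; rewrite pwZ e1 => /eqP; rewrite scaler_eq0 (negbTE (lfun1_neq0 dpos)) orbF.
  by rewrite expf_eq0 => /andP [_ /eqP ->]; rewrite scale0r.
- split.
    by move=> x y /HN Mx /HN My; apply/HN; apply: M_prod.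
  exists k => m x le jm.
  apply: (jmon_zero Fk _ le jm) => z /HN Mz; exact: HF.
Qed.

End Local.

Lemma part1_core phi : J phi ->
  jinvertible J phi \/ jnilpotent phi \/
  (exists e, J e /\ (e \o e = e)%VF /\ e != 0 /\ e != \1%VF).
Proof.
move=> Jphi.
case: (fitting Jphi) => [[psi [Jpsi [e1 e2]]] | [[n [n0 hn]] | hid]].
- left; exists psi => //; split.
    by rewrite jprod_comm e1 // e2.
  rewrite (jprod_comm (x := phi)) // jprod_comm.
    by rewrite -comp_lfunA e1 comp_lfun1r.
  by rewrite -comp_lfunA e1 comp_lfun1r comp_lfunA e2 comp_lfun1l.
- by right; left; exists n; rewrite jpow_pw.
- by right; right.
Qed.

End JAbs.

Section Bracket.
Variables (K : fieldType) (V : vectType K) (br : V -> V -> V).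
Hypothesis Hbr : is_lie_bracket br.

Lemma br0l z : br 0 z = 0.
Proof.
case: Hbr => H1 _ _ _; have h := H1 1 0 0 z.
rewrite scaler0 addr0 scale1r in h.
by move: h; rewrite -{1}[br 0 z]addr0 => /addrI <-.
Qed.

Lemma br0r z : br z 0 = 0.
Proof.
case: Hbr => _ H2 _ _; have h := H2 1 0 0 z.
rewrite scaler0 addr0 scale1r in h.
by move: h; rewrite -{1}[br z 0]addr0 => /addrI <-.
Qed.

Lemma brDl x y z : br (x + y) z = br x z + br y z.
Proof. by case: Hbr => H1 _ _ _; have := H1 1 x y z; rewrite !scale1r. Qed.

Lemma brDr x y z : br z (x + y) = br z x + br z y.
Proof. by case: Hbr => _ H2 _ _; have := H2 1 x y z; rewrite !scale1r. Qed.

Lemma brZr a x z : br z (a *: x) = a *: br z x.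
Proof. by case: Hbr => _ H2 _ _; rewrite -[a *: x]addr0 H2 br0r addr0. Qed.

Lemma br_anti x y : br x y = - br y x.
Proof.
case: Hbr => _ _ H3 _; have := H3 (x + y).
rewrite brDl !brDr !H3 add0r addr0 => /eqP; rewrite addr_eq0 => /eqP //.
Qed.

Lemma homlie0 : homlie br 0.
Proof. by move=> x y z; rewrite !zero_lfunE !br0r !addr0. Qed.

Lemma homlie1 : homlie br \1%VF.
Proof.
move=> x y z; rewrite !id_lfunE.
case: Hbr => _ _ _ H4; have j := H4 x y z.
rewrite (br_anti (br x y) z) (br_anti (br z x) y) (br_anti (br y z) x).
rewrite -!opprD; apply/eqP; rewrite oppr_eq0; apply/eqP.
by rewrite -j addrC (addrC (br z (br x y))) addrA.
Qed.

Lemma homlie_lin a f g : homlie br f -> homlie br g -> homlie br (a *: f + g).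
Proof.
move=> hf hg x y z; rewrite !add_lfunE !scale_lfunE !brDr !brZr.
rewrite [_ + (a *: br (br z x) (f y) + _)]addrACA (addrACA (a *: br (br x y) (f z) + a *: br (br z x) (f y))) -!scalerDr hf hg scaler0 addr0.
done.
Qed.

Lemma idem_cond e : homlie br e -> (e \o e = e)%VF -> e != 0 -> e != \1%VF ->
    exists A B : {vspace V},
      [/\ directv (A + B)%VS, (A + B)%VS = fullv, A != 0%VS, B != 0%VS &
          (forall a a' b, a \in A -> a' \in A -> b \in B -> br (br a a') b = 0) /\
          (forall b b' a, b \in B -> b' \in B -> a \in A -> br (br b b') a = 0)].
Proof.
move=> he ee e0 e1.
have eA : forall a, a \in limg e -> e a = a.
  by move=> a /memv_imgP [w _ ->]; rewrite -comp_lfunE ee.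
have eB : forall b, b \in lker e -> e b = 0 by move=> b; rewrite memv_ker => /eqP.
exists (limg e), (lker e); split.
- apply/directv_addP; apply/eqP; rewrite -subv0; apply/subvP => w /memv_capP [wA wB].
  by rewrite memv0 -(eA w wA) (eB w wB).
- apply/vspaceP => w; rewrite memvf.
  have -> : w = e w + (w - e w) by rewrite addrC subrK.
  apply: memv_add; first by apply: memv_img; apply: memvf.
  by rewrite memv_ker linearB /= -comp_lfunE ee subrr.
- apply: contraNneq e0 => h; apply/eqP/lfunP => w; rewrite zero_lfunE.
  by apply/eqP; rewrite -memv0 -h memv_img ?memvf.
- apply: contraNneq e1 => h; apply/eqP/lfunP => w; rewrite id_lfunE.
  have /lker0P ie : lker e == 0%VS by rewrite h.
  by apply: ie; rewrite -comp_lfunE ee.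
split.
  move=> a a' b aA a'A bB.
  have h1 := he a a' b; rewrite (eB b bB) (eA a aA) (eA a' a'A) br0r add0r in h1.
  case: Hbr => _ _ _ H4; have j := H4 a' b a.
  rewrite (br_anti a' (br b a)) (br_anti a (br a' b)) in j.
  rewrite br_anti; apply/eqP; rewrite oppr_eq0; apply/eqP.
  move/eqP: j; rewrite addrAC -opprD addrC subr_eq0 => /eqP ->.
  exact: h1.
move=> b b' a bB b'B aA.
have h1 := he b b' a; rewrite (eB b bB) (eB b' b'B) (eA a aA) !br0r !addr0 in h1.
exact: h1.
Qed.

End Bracket.

Theorem proposition2p3 (K : fieldType) (V : vectType K) (br : V -> V -> V) :
  perfect_field K ->
  2%N \notin [pchar K] ->
  is_lie_bracket br ->
  (forall phi psi : 'End(V), homlie br phi -> homlie br psi ->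
     homlie br (jprod phi psi)) ->
  let cond_ii :=
    exists A B : {vspace V},
      [/\ directv (A + B)%VS, (A + B)%VS = fullv, A != 0%VS, B != 0%VS &
          (forall a a' b, a \in A -> a' \in A -> b \in B -> br (br a a') b = 0) /\
          (forall b b' a, b \in B -> b' \in B -> a \in A -> br (br b b') a = 0)] in
  ((forall phi : 'End(V), homlie br phi ->
       jinvertible (homlie br) phi \/ jnilpotent phi)
   \/ cond_ii)
  /\
  (GRing.closed_field_axiom K ->
   (exists N : {vspace 'End(V)},
      [/\ (forall phi, phi \in N -> homlie br phi),
          (forall phi, homlie br phi ->
             exists (c : K) (n : 'End(V)), n \in N /\ phi = c *: \1%VF + n),
          (forall c : K, c *: \1%VF \in N -> c *: (\1%VF : 'End(V)) = 0) &
          jnilpotent_algebra N])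
   \/ cond_ii).
Proof.
move=> _ ch2 Hbr Hcl cond_ii.
have two0 : (2%:R : K) != 0.
  apply/negP => /eqP h20; move/negP: ch2; apply.
  by rewrite inE /= h20 eqxx.
have J0 := homlie0 Hbr.
have Jlin := @homlie_lin K V br Hbr.
have J1 := homlie1 Hbr.
have noid : ~ cond_ii -> forall e, homlie br e -> (e \o e = e)%VF -> e = 0 \/ e = \1%VF.
  move=> nci e he ee; apply: NNPP => h; apply: nci.
  apply: (idem_cond Hbr he ee); apply/eqP => h'; apply: h; [left | right] => //.
split.
  case: (classic cond_ii) => [ci | nci]; [by right | left].
  move=> phi Jphi.
  case: (part1_core J0 Jlin J1 Hcl two0 Jphi) => [h | [h | [e [Je [ee [e0 e1]]]]]].
  - by left.
  - by right.
  - exfalso; apply: nci; exact: (idem_cond Hbr Je ee e0 e1).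
move=> clK; case: (classic cond_ii) => [ci | nci]; [by right | left].
case: (posnP (dim V)) => [d0 | dpos]; last first.
  exact: (part2_core J0 Jlin J1 Hcl two0 (noid nci) clK dpos).
have all0 : forall f : 'End(V), f = 0.
  move=> f; apply/lfunP => v; rewrite zero_lfunE.
  have : v \in (fullv : {vspace V}) by rewrite memvf.
  have -> : (fullv : {vspace V}) = 0%VS by apply/eqP; rewrite -dimv_eq0 dimvf d0.
  by rewrite memv0 => /eqP ->; rewrite linear0.
exists 0%VS; split.
- by move=> phi _; rewrite (all0 phi).
- by move=> phi _; exists 0, 0; split; [rewrite mem0v | rewrite (all0 phi) (all0 (_ + _))].
- by move=> c _; apply: all0.
- split; first by move=> x y _ _; rewrite (all0 (jprod x y)) mem0v.
  by exists 0%N => m x _ _; apply: all0.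
Qed.
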